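(* Let $p$ be a prime and $G=S^1\times C_p$. Then $G$ is not a BU-group of type I: there exist fixed-point-free orthogonal $G$-representations $V,W$ with $\dim V>\dim W$ and a $G$-map $f:S(V)\to S(W)$. (For instance, $V=2V_{1,0}\oplus 2V_{1,1}$ and $W=2V_{p,0}\oplus V_{0,1}$.)
   Context: Let $a$ be a generator of $C_p$ and $\xi_p=e^{2\pi\sqrt{-1}/p}$. For $k\in\mathbb{Z}$ and $l\in\mathbb{Z}/p$, $V_{k,l}$ is the $1$-dimensional unitary $G$-representation on $\mathbb{C}$ with $(t,a^j)\cdot z=t^k\xi_p^{jl}z$ for $t\in S^1$, regarded as a real $2$-dimensional orthogonal representation. An orthogonal $G$-representation $V$ is fixed-point-free if $V^G=0$; $S(V)$ denotes its unit sphere; a $G$-map is a continuous $G$-equivariant map. $G$ is a BU-group of type I if for all fixed-point-free orthogonal $G$-representations $V,W$, the existence of a $G$-map $S(V)\to S(W)$ implies $\dim V\le\dim W$. *)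

(* Defs.v *)
From HB Require Import structures.
From mathcomp Require Import all_boot all_order all_algebra.
From mathcomp Require Import all_classical all_reals all_analysis.
Set Implicit Arguments. Unset Strict Implicit. Unset Printing Implicit Defensive.
Import Order.TTheory GRing.Theory Num.Theory.
Import numFieldNormedType.Exports.
Local Open Scope classical_set_scope.
Local Open Scope ring_scope.

(* The circle group S^1, realized as SO(2) = rotation matrices in 'M[R]_2,
   with group law matrix multiplication (isomorphic to unit complex numbers). *)
Definition SO2 (R : realType) : set 'M[R]_2 :=
  [set t | t *m t^T = 1%:M /\ \det t = 1].

(* An orthogonal representation of G = S^1 x C_p on R^n (standard inner
   product): rho t j is the matrix of (t, a^j), for t in SO2, j : 'Z_p. *)
Definition orth_rep (R : realType) (p n : nat)
    (rho : 'M[R]_2 -> 'Z_p -> 'M[R]_n) : Prop :=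
  [/\ (forall t j, SO2 t -> rho t j *m (rho t j)^T = 1%:M),
      rho 1%:M 0 = 1%:M,
      (forall t s j k, SO2 t -> SO2 s ->
          rho (t *m s) (j + k) = rho t j *m rho s k) &
      (forall j, {within @SO2 R, continuous (fun t => rho t j)})].

(* Action of (t, a^j) on a vector v in R^n (row vector convention). *)
Definition act (R : realType) (p n : nat) (rho : 'M[R]_2 -> 'Z_p -> 'M[R]_n)
    (t : 'M[R]_2) (j : 'Z_p) (v : 'rV[R]_n) : 'rV[R]_n :=
  v *m (rho t j)^T.

Definition fixed_point_free (R : realType) (p n : nat)
    (rho : 'M[R]_2 -> 'Z_p -> 'M[R]_n) : Prop :=
  forall v : 'rV[R]_n,
    (forall t j, SO2 t -> act rho t j v = v) -> v = 0.

Definition unit_sphere (R : realType) (n : nat) : set 'rV[R]_n :=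
  [set v | \sum_(i < n) (v ord0 i) ^+ 2 = 1].

Definition Gmap (R : realType) (p n m : nat)
    (rhoV : 'M[R]_2 -> 'Z_p -> 'M[R]_n) (rhoW : 'M[R]_2 -> 'Z_p -> 'M[R]_m)
    (f : 'rV[R]_n -> 'rV[R]_m) : Prop :=
  [/\ (forall v, @unit_sphere R n v -> @unit_sphere R m (f v)),
      {within @unit_sphere R n, continuous f} &
      (forall t j v, SO2 t -> @unit_sphere R n v ->
          f (act rhoV t j v) = act rhoW t j (f v))].

(* Main.v *)
Require Import Defs.
From HB Require Import structures.
From mathcomp Require Import all_boot all_order all_algebra.
From mathcomp Require Import all_classical all_reals all_analysis.
From mathcomp Require Import ring lra.
Set Implicit Arguments. Unset Strict Implicit. Unset Printing Implicit Defensive.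
Import Order.TTheory GRing.Theory Num.Theory.
Import numFieldNormedType.Exports.
Local Open Scope classical_set_scope.
Local Open Scope ring_scope.

Section Cplx.
Variable R : realType.
Definition cC := (R * R)%type.
Definition cmul (a b : cC) : cC := (a.1 * b.1 - a.2 * b.2, a.1 * b.2 + a.2 * b.1).
Definition cone : cC := (1, 0).
Definition cpow (a : cC) (n : nat) : cC := iter n (cmul a) cone.
Definition cconj (a : cC) : cC := (a.1, - a.2).
Definition cnorm (a : cC) : R := a.1 ^+ 2 + a.2 ^+ 2.
Definition cscale (r : R) (a : cC) : cC := (r * a.1, r * a.2).
Definition cadd (a b : cC) : cC := (a.1 + b.1, a.2 + b.2).

Lemma cmulC a b : cmul a b = cmul b a.
Proof. by case: a b => [x y] [u v]; rewrite /cmul /=; congr (_,_); ring. Qed.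
Lemma cmulA a b c : cmul a (cmul b c) = cmul (cmul a b) c.
Proof. by case: a b c => [x y] [u v] [s t]; rewrite /cmul /=; congr (_,_); ring. Qed.
Lemma cmul1 a : cmul a cone = a.
Proof. by case: a => [x y]; rewrite /cmul /=; congr (_,_); ring. Qed.
Lemma cpowS a n : cpow a n.+1 = cmul a (cpow a n).
Proof. by []. Qed.
Lemma cpowD a m n : cpow a (m + n) = cmul (cpow a m) (cpow a n).
Proof.
elim: m => [|m IH]; first by rewrite add0n cmulC cmul1.
by rewrite addSn !cpowS IH cmulA.
Qed.
Lemma cpowM a m n : cpow a (m * n) = cpow (cpow a m) n.
Proof.
elim: n => [|n IH]; first by rewrite muln0.
by rewrite mulnS cpowD IH cpowS.
Qed.
Lemma cpow_mul a b n : cpow (cmul a b) n = cmul (cpow a n) (cpow b n).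
Proof.
elim: n => [|n IH]; first by rewrite /= cmul1.
rewrite !cpowS IH -!cmulA; congr cmul; rewrite !cmulA; congr cmul; exact: cmulC.
Qed.
Lemma cnorm_mul a b : cnorm (cmul a b) = cnorm a * cnorm b.
Proof. by case: a b => [x y] [u v]; rewrite /cnorm /cmul /=; ring. Qed.
Lemma cnorm_pow a n : cnorm (cpow a n) = cnorm a ^+ n.
Proof.
elim: n => [|n IH]; first by rewrite /cnorm /= expr0; ring.
by rewrite cpowS cnorm_mul IH exprS.
Qed.
Lemma cconj_mul a b : cconj (cmul a b) = cmul (cconj a) (cconj b).
Proof. by case: a b => [x y] [u v]; rewrite /cconj /cmul /=; congr (_,_); ring. Qed.
Lemma cconj_pow a n : cconj (cpow a n) = cpow (cconj a) n.
Proof.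
elim: n => [|n IH]; first by rewrite /cconj /=; congr (_,_); ring.
by rewrite !cpowS cconj_mul IH.
Qed.
Lemma cmul_conj a : cmul (cconj a) a = (cnorm a, 0).
Proof. by case: a => [x y]; rewrite /cconj /cmul /cnorm /=; congr (_,_); ring. Qed.
Lemma cpow_scale r a n : cpow (cscale r a) n = cscale (r ^+ n) (cpow a n).
Proof.
elim: n => [|n IH]; first by rewrite /cscale /=; congr (_,_); ring.
rewrite !cpowS IH; move: (cpow a n) => [u v]; clear IH; case: a => [x y]; rewrite /cscale /cmul /= exprS.
congr (_,_); ring.
Qed.
Lemma cmul_scale r a b : cmul (cscale r a) b = cscale r (cmul a b).
Proof. by case: a b => [x y] [u v]; rewrite /cscale /cmul /=; congr (_,_); ring. Qed.
Lemma cmul_scaler r a b : cmul a (cscale r b) = cscale r (cmul a b).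
Proof. by case: a b => [x y] [u v]; rewrite /cscale /cmul /=; congr (_,_); ring. Qed.
Lemma cnorm_ge0 a : 0 <= cnorm a.
Proof. by rewrite /cnorm addr_ge0 // sqr_ge0. Qed.
Lemma cnorm_eq0 a : cnorm a = 0 -> a = (0, 0).
Proof.
case: a => [x y]; rewrite /cnorm /= => h.
have hx : x ^+ 2 = 0 by apply/eqP; rewrite eq_le sqr_ge0 andbT -h lerDl sqr_ge0.
have hy : y ^+ 2 = 0 by move: h; rewrite hx add0r.
by move/eqP: hx; rewrite sqrf_eq0 => /eqP->; move/eqP: hy; rewrite sqrf_eq0 => /eqP->.
Qed.
Lemma cpow0 n : (0 < n)%N -> cpow (0, 0) n = (0, 0).
Proof.
case: n => // n _; rewrite cpowS; case: (cpow _ n) => u v; rewrite /cmul /=; congr (_,_); ring.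
Qed.

Lemma key (N : nat) (z1 z2 z3 z4 : cC) : (0 < N)%N ->
  cadd (cpow z1 N) (cpow z3 N) = (0, 0) ->
  cadd (cpow z2 N) (cscale ((-1) ^+ N.+1) (cpow z4 N)) = (0, 0) ->
  cadd (cmul (cconj z1) z3) (cmul (cconj z2) z4) = (0, 0) ->
  [/\ z1 = (0,0), z2 = (0,0), z3 = (0,0) & z4 = (0,0)].
Proof.
move=> N0 e1 e2 e3.
set s := cmul (cconj z1) z3.
have h3 : cpow z3 N = cscale (-1) (cpow z1 N).
  move: e1; case: (cpow z1 N) (cpow z3 N) => [a b] [c d] [] ha hb.
  rewrite /cscale /=; congr (_,_); lra.
have h4 : cpow z4 N = cscale ((-1) ^+ N) (cpow z2 N).
  move: e2; case: (cpow z2 N) (cpow z4 N) => [a b] [c d] [] ha hb.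
  rewrite /cscale /=; have sq : ((-1) ^+ N.+1) * (-1) ^+ N = - 1 :> R.
    by rewrite exprS mulN1r mulNr -expr2 -exprM mulnC exprM sqrrN !expr1n.
  congr (_,_).
    have : (-1) ^+ N * (a + (-1) ^+ N.+1 * c) = 0 by rewrite ha mulr0.
    by rewrite mulrDr mulrA (mulrC _ ((-1) ^+ N.+1)) sq => h; lra.
  have : (-1) ^+ N * (b + (-1) ^+ N.+1 * d) = 0 by rewrite hb mulr0.
  by rewrite mulrDr mulrA (mulrC _ ((-1) ^+ N.+1)) sq => h; lra.
have hs2 : s = cscale (-1) (cmul (cconj z2) z4).
  move: e3; rewrite -/s; case: s (cmul _ z4) => [a b] [c d] [] ha hb.
  rewrite /cscale /=; congr (_,_); lra.
have P1 : cpow s N = (- cnorm z1 ^+ N, 0).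
  rewrite /s cpow_mul h3 cmul_scaler -cconj_pow cmul_conj cnorm_pow /cscale /=.
  congr (_,_); ring.
have P2 : cpow s N = (cnorm z2 ^+ N, 0).
  rewrite hs2 cpow_scale cpow_mul h4 cmul_scaler -cconj_pow cmul_conj cnorm_pow.
  rewrite /cscale /= !mulrA.
  have -> : (-1) ^+ N * (-1) ^+ N = 1 :> R by rewrite -expr2 -exprM mulnC exprM sqrrN !expr1n.
  congr (_,_); ring.
have : - cnorm z1 ^+ N = cnorm z2 ^+ N by move: P1; rewrite P2 => -[].
move=> E.
have n1 : cnorm z1 ^+ N = 0.
  apply/eqP; rewrite eq_le exprn_ge0 ?cnorm_ge0 // andbT.
  rewrite -oppr_ge0 E exprn_ge0 // cnorm_ge0 //.
have n2 : cnorm z2 ^+ N = 0 by rewrite -E n1 oppr0.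
have Z1 : z1 = (0,0) by apply: cnorm_eq0; move/eqP: n1; rewrite expf_eq0 => /andP[_ /eqP].
have Z2 : z2 = (0,0) by apply: cnorm_eq0; move/eqP: n2; rewrite expf_eq0 => /andP[_ /eqP].
have Z3 : z3 = (0,0).
  apply: cnorm_eq0; have : cnorm (cpow z3 N) = 0.
    by rewrite h3 Z1 cpow0 // /cscale /cnorm /=; ring.
  by rewrite cnorm_pow => /eqP; rewrite expf_eq0 => /andP[_ /eqP].
have Z4 : z4 = (0,0).
  apply: cnorm_eq0; have : cnorm (cpow z4 N) = 0.
    by rewrite h4 Z2 cpow0 // /cscale /cnorm /=; ring.
  by rewrite cnorm_pow => /eqP; rewrite expf_eq0 => /andP[_ /eqP].
by [].
Qed.
End Cplx.


Section Mx.
Variable R : realType.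
Local Notation cC := (cC R).
Definition ofC (z : cC) : 'rV[R]_2 := \row_(k < 2) if (k : nat) == 0%N then z.1 else z.2.
Definition toC (b : 'rV[R]_2) : cC := (b ord0 ord0, b ord0 ord_max).
Definition cmx (z : cC) : 'M[R]_2 := \matrix_(i < 2, k < 2)
  if (i : nat) == 0%N then (if (k : nat) == 0%N then z.1 else - z.2)
  else (if (k : nat) == 0%N then z.2 else z.1).

Lemma sum2 (f : 'I_2 -> R) : \sum_(i < 2) f i = f ord0 + f ord_max.
Proof. by rewrite !big_ord_recr big_ord0 /= add0r; congr (f _ + f _); apply/val_inj. Qed.

Lemma I2 (i : 'I_2) : i = ord0 \/ i = ord_max.
Proof. by case: i => [[|[|i]] hi]; [left|right|]; try apply/val_inj. Qed.

Lemma ofCK z : toC (ofC z) = z.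
Proof. by case: z => x y; rewrite /toC !mxE. Qed.
Lemma toCK b : ofC (toC b) = b.
Proof.
apply/rowP => k; rewrite mxE /toC /=; case: k => [[|[|k]] hk] //=; rewrite (ord1 ord0) //;
 congr (b _ _); apply/val_inj => //.
Qed.

Lemma mul_cmx a b : cmx a *m cmx b = cmx (cmul a b).
Proof.
apply/matrixP => i j; rewrite !mxE sum2 !mxE /cmul /=.
by case: i => [[|[|i]] hi] //; case: j => [[|[|j]] hj] //=; ring.
Qed.
Lemma tr_cmx a : (cmx a)^T = cmx (cconj a).
Proof.
apply/matrixP => i j; rewrite !mxE /cconj /=.
by case: i => [[|[|i]] hi] //; case: j => [[|[|j]] hj] //=; rewrite opprK.
Qed.
Lemma cmx_scalar r : cmx (r, 0) = r%:M.
Proof.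
apply/matrixP => i j; rewrite !mxE /=.
by case: i => [[|[|i]] hi] //; case: j => [[|[|j]] hj] //=; rewrite oppr0.
Qed.
Lemma act_cmx b w : b *m (cmx w)^T = ofC (cmul (toC b) w).
Proof.
apply/rowP => k; rewrite !mxE sum2 !mxE /cmul /toC /=.
by case: k => [[|[|k]] hk] //=; ring.
Qed.
Lemma sumsq2 (b : 'rV[R]_2) : \sum_(i < 2) b ord0 i ^+ 2 = cnorm (toC b).
Proof. by rewrite sum2. Qed.
Lemma ofC_scale r z : ofC (cscale r z) = r *: ofC z.
Proof. by apply/rowP => k; rewrite !mxE; case: ifP. Qed.

Definition ct (t : 'M[R]_2) : cC := (t ord0 ord0, t ord_max ord0).

Lemma SO2E (t : 'M[R]_2) : t *m t^T = 1%:M -> \det t = 1 ->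
  t = cmx (ct t) /\ cnorm (ct t) = 1.
Proof.
move=> /matrixP h d.
have h00 := h ord0 ord0; have h11 := h ord_max ord_max; have h01 := h ord0 ord_max.
move: h00 h11 h01; rewrite !mxE !sum2 !mxE /= => h00 h11 h01.
move: d; rewrite (expand_det_row _ ord0) sum2 /cofactor !det_mx11 !mxE /= => d.
move: d; rewrite !expr0 !expr1 /= => d.
set a := t ord0 ord0 in h00 h11 h01 d *; set b := t ord0 ord_max in h00 h11 h01 d *.
set c := t ord_max ord0 in h00 h11 h01 d *; set e := t ord_max ord_max in h00 h11 h01 d *.
have L1 : lift ord0 (0 : 'I_1) = ord_max :> 'I_2 by apply/val_inj.
have L2 : lift ord_max (0 : 'I_1) = ord0 :> 'I_2 by apply/val_inj.
rewrite L1 L2 -/e -/c in d.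
have E1 : cnorm (e - a, c + b) = 0.
  rewrite /cnorm /= (_ : _ + _ = (a*a+b*b) + (c*c+e*e) - 2*(a*(1*e)+b*(-1*c))); last by ring.
  by rewrite h00 h11 d; ring.
have [Ea Eb] : e = a /\ b = - c.
  move/cnorm_eq0: E1 => [/eqP]; rewrite subr_eq0 => /eqP -> /eqP.
  by rewrite addr_eq0 => /eqP ->; rewrite opprK.
split; last by rewrite /cnorm /ct /= -/a -/c; apply: (etrans _ h00); rewrite Eb; ring.
apply/matrixP => i j; rewrite !mxE /ct /=.
by case: (I2 i) => ->; case: (I2 j) => -> /=; rewrite ?Ea ?Eb.
Qed.
End Mx.


Section Bd.
Variable R : realType.
Definition bd k (B : 'I_k -> 'M[R]_2) : 'M[R]_(\sum_(i < k) 2) := \mxdiag_(i < k) B i.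

Lemma bd_mul k (B C : 'I_k -> 'M[R]_2) : bd B *m bd C = bd (fun i => B i *m C i).
Proof.
rewrite /bd /mxdiag mul_mxblock_mxdiag; apply/eq_mxblock => i j.
by case: eqVneq => [->|_]; rewrite ?conform_mx_id ?mul0mx.
Qed.
Lemma bd_tr k (B : 'I_k -> 'M[R]_2) : (bd B)^T = bd (fun i => (B i)^T).
Proof. exact: tr_mxdiag. Qed.
Lemma bd_scalar k (a : R) : bd (fun _ : 'I_k => a%:M) = a%:M.
Proof. exact: mxdiagZ. Qed.
Lemma bd_act k (B : 'I_k -> 'M[R]_2) (v : 'rV[R]_(\sum_(i < k) 2)) :
  v *m (bd B)^T = \mxrow_i (submxrow v i *m (B i)^T).
Proof. by rewrite bd_tr -{1}(submxrowK v) /bd mul_mxrow_mxdiag. Qed.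
Lemma sumsq_bd k (v : 'rV[R]_(\sum_(i < k) 2)) :
  \sum_(l < \sum_(i < k) 2) v ord0 l ^+ 2 = \sum_(i < k) cnorm (toC (submxrow v i)).
Proof.
have -> : \sum_(l < \sum_(i < k) 2) v ord0 l ^+ 2 = (v *m v^T) ord0 ord0.
  by rewrite !mxE; apply: eq_bigr => l _; rewrite mxE expr2.
rewrite -[v *m v^T](congr1 (fun w => w *m w^T) (submxrowK v)) tr_mxrow mul_mxrow_mxcol summxE.
apply: eq_bigr => i _; rewrite -sumsq2 mxE; apply: eq_bigr => l _; by rewrite !mxE expr2.
Qed.

Lemma mx_cont (T : topologicalType) m n (F : T -> 'M[R]_(m,n)) :
  (forall i j, continuous (fun x => F x i j)) -> continuous F.
Proof.
move=> h x A [P hP sPA].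
have : \forall y \near x, forall ij : 'I_m * 'I_n, P ij.1 ij.2 (F y ij.1 ij.2).
  apply: filter_forall => -[i j] /=.
  exact: (h i j x _ (hP i j)).
apply: filterS => y Hy; apply: sPA => i j; exact: (Hy (i, j)).
Qed.

Lemma conf2 (M : 'M[R]_2) (a b : 'I_2) : (conform_mx (0 : 'M[R]_(2, 2)) M) a b = M a b.
Proof. by rewrite conform_mx_id. Qed.

Lemma bd_cont (T : topologicalType) k (F : T -> 'I_k -> 'M[R]_2) :
  (forall i a b, continuous (fun x => F x i a b)) -> continuous (fun x => bd (F x)).
Proof.
move=> h; apply: mx_cont => a b.
rewrite /bd /mxdiag; under eq_fun do rewrite !mxE.
case: eqP => [e|_]; last exact: cst_continuous.
move: (tagnat.sig2 a) (tagnat.sig2 b) => a' b'.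
have E : (fun x => (conform_mx 0 (F x (tagnat.sig1 a))) a' b') =1 (fun x => F x (tagnat.sig1 a) a' b').
  move=> x; exact: conf2.
rewrite (funext E) => x; rewrite E; exact: (h (tagnat.sig1 a) a' b' x).
Qed.

Lemma mxrow_cont (T : topologicalType) k (F : T -> 'I_k -> 'rV[R]_2) :
  (forall i b, continuous (fun x => F x i ord0 b)) ->
  continuous (fun x => (\mxrow_i F x i : 'rV[R]_(\sum_(i < k) 2))).
Proof.
move=> h; apply: mx_cont => a b.
under eq_fun do rewrite !mxE.
rewrite (ord1 a); exact: h.
Qed.

Lemma submxrow_cont k (i : 'I_k) (l : 'I_2) :
  continuous (fun v : 'rV[R]_(\sum_(i < k) 2) => submxrow v i ord0 l).
Proof.
have E : (fun v : 'rV[R]_(\sum_(i < k) 2) => submxrow v i ord0 l) =1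
  (fun v => v ord0 (tagnat.Rank i l)) by move=> v; rewrite mxE.
rewrite (funext E); exact: coord_continuous.
Qed.
End Bd.


Section Cont.
Variables (R : realType) (T : topologicalType).
Lemma contD (f g : T -> R) : continuous f -> continuous g -> continuous (fun x => f x + g x).
Proof. by move=> hf hg x; apply: cvgD; [exact: hf|exact: hg]. Qed.
Lemma contB (f g : T -> R) : continuous f -> continuous g -> continuous (fun x => f x - g x).
Proof. by move=> hf hg x; apply: cvgB; [exact: hf|exact: hg]. Qed.
Lemma contM (f g : T -> R) : continuous f -> continuous g -> continuous (fun x => f x * g x).
Proof. by move=> hf hg x; apply: cvgM; [exact: hf|exact: hg]. Qed.
Lemma contN (f : T -> R) : continuous f -> continuous (fun x => - f x).
Proof. by move=> hf x; apply: cvgN; exact: hf. Qed.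
Lemma contC (c : R) : continuous (fun _ : T => c).
Proof. exact: cst_continuous. Qed.
Definition ccont (F : T -> cC R) :=
  continuous (fun x => (F x).1) /\ continuous (fun x => (F x).2).
Lemma ccont_cst z : ccont (fun _ => z).
Proof. by split; apply: cst_continuous. Qed.
Lemma ccont_mul F G : ccont F -> ccont G -> ccont (fun x => cmul (F x) (G x)).
Proof. by move=> [F1 F2] [G1 G2]; split; rewrite /=; [apply: contB|apply: contD]; apply: contM. Qed.
Lemma ccont_add F G : ccont F -> ccont G -> ccont (fun x => cadd (F x) (G x)).
Proof. by move=> [F1 F2] [G1 G2]; split; apply: contD. Qed.
Lemma ccont_conj F : ccont F -> ccont (fun x => cconj (F x)).
Proof. by move=> [F1 F2]; split => //; apply: contN. Qed.
Lemma ccont_scale r F : ccont F -> ccont (fun x => cscale r (F x)).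
Proof. by move=> [F1 F2]; split; apply: contM => //; apply: contC. Qed.
Lemma ccont_pow F n : ccont F -> ccont (fun x => cpow (F x) n).
Proof.
move=> hF; elim: n => [|n IH]; first exact: ccont_cst.
exact: ccont_mul.
Qed.
Lemma ccont_norm F : ccont F -> continuous (fun x => cnorm (F x)).
Proof. by move=> [F1 F2]; rewrite /cnorm; apply: contD; under eq_fun do rewrite expr2; apply: contM. Qed.
Lemma ccont_cmx F a b : ccont F -> continuous (fun x => cmx (F x) a b).
Proof.
move=> [F1 F2]; case: (I2 a) => ->; case: (I2 b) => ->; under eq_fun do rewrite mxE /=;
  by [apply: F1|apply: F2|apply: contN].
Qed.
End Cont.


Section Gen.
Variable R : realType.
Local Notation cC := (cC R).

Lemma cpow_one n : cpow (cone R) n = cone R.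
Proof. by elim: n => // n IH; rewrite cpowS IH cmul1. Qed.

Lemma cpow_angle (a : R) n : cpow (cos a, sin a) n = (cos (a *+ n), sin (a *+ n)).
Proof.
elim: n => [|n IH]; first by rewrite /= mulr0n cos0 sin0.
rewrite cpowS IH /cmul /= mulrS cosD sinD; congr (_,_); ring.
Qed.

Lemma cnorm_angle (a : R) : cnorm (cos a, sin a) = 1.
Proof. by rewrite /cnorm /= cos2Dsin2. Qed.

Lemma ct_cmx (z : cC) : ct (cmx z) = z.
Proof. by case: z => x y; rewrite /ct !mxE. Qed.

Lemma cmx_one : cmx (cone R) = 1%:M.
Proof. exact: cmx_scalar. Qed.

Lemma cmul_cconj_r (a : cC) : cmul a (cconj a) = (cnorm a, 0).
Proof. by rewrite cmulC cmul_conj. Qed.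

Lemma det_cmx (z : cC) : \det (cmx z) = cnorm z.
Proof.
rewrite (expand_det_row _ ord0) sum2 /cofactor !det_mx11 !mxE /= !expr0 !expr1 /=.
have L1 : lift ord0 (0 : 'I_1) = ord_max :> 'I_2 by apply/val_inj.
have L2 : lift ord_max (0 : 'I_1) = ord0 :> 'I_2 by apply/val_inj.
by rewrite /cnorm; ring.
Qed.

Lemma SO2_cmx (z : cC) : cnorm z = 1 -> SO2 (cmx z).
Proof.
move=> h; split; last by rewrite det_cmx.
by rewrite tr_cmx mul_cmx cmul_cconj_r h cmx_scalar.
Qed.

Lemma SO2_ct (t : 'M[R]_2) : SO2 t -> t = cmx (ct t) /\ cnorm (ct t) = 1.
Proof. by move=> [h1 h2]; apply: SO2E. Qed.

Definition vec k (F : 'I_k -> cC) : 'rV[R]_(\sum_(i < k) 2) := \mxrow_i ofC (F i).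
Definition blk k (v : 'rV[R]_(\sum_(i < k) 2)) (i : 'I_k) : cC := toC (submxrow v i).

Lemma blk_vec k (F : 'I_k -> cC) i : blk (vec F) i = F i.
Proof. by rewrite /blk /vec mxrowK ofCK. Qed.
Lemma vec_blk k (v : 'rV[R]_(\sum_(i < k) 2)) : vec (blk v) = v.
Proof. by rewrite /vec /blk; under eq_mxrow do rewrite toCK; rewrite submxrowK. Qed.

Definition Sv n (v : 'rV[R]_n) := \sum_(l < n) v ord0 l ^+ 2.

Lemma Sv_blk k (v : 'rV[R]_(\sum_(i < k) 2)) : Sv v = \sum_i cnorm (blk v i).
Proof. exact: sumsq_bd. Qed.

Lemma act_bd k (a : 'I_k -> cC) (v : 'rV[R]_(\sum_(i < k) 2)) :
  v *m (bd (fun i => cmx (a i)))^T = vec (fun i => cmul (blk v i) (a i)).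
Proof. rewrite bd_act /vec. refine (@eq_mxrow _ k (fun _ => 2%N) 1%N _ _ _). move=> i; exact: act_cmx. Qed.

Lemma Sv_scale n (c : R) (v : 'rV[R]_n) : Sv (c *: v) = c ^+ 2 * Sv v.
Proof. by rewrite /Sv big_distrr; apply: eq_bigr => l _; rewrite mxE exprMn. Qed.

Lemma bd_cmx_mul k (a b : 'I_k -> cC) :
  bd (fun i => cmx (a i)) *m bd (fun i => cmx (b i)) = bd (fun i => cmx (cmul (a i) (b i))).
Proof. by rewrite bd_mul; congr bd; apply: funext => i; rewrite mul_cmx. Qed.

Lemma bd_cmx_orth k (a : 'I_k -> cC) : (forall i, cnorm (a i) = 1) ->
  bd (fun i => cmx (a i)) *m (bd (fun i => cmx (a i)))^T = 1%:M.
Proof.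
move=> h; rewrite bd_tr bd_mul -(bd_scalar k 1); congr bd; apply: funext => i.
by rewrite tr_cmx mul_cmx cmul_cconj_r h cmx_scalar.
Qed.

Lemma fpf_blk k (a : 'I_k -> cC) (v : 'rV[R]_(\sum_(i < k) 2)) :
  v *m (bd (fun i => cmx (a i)))^T = v -> forall i, cmul (blk v i) (a i) = blk v i.
Proof. move=> h i; have := congr1 (fun w => blk w i) h; by rewrite /= act_bd blk_vec. Qed.

Lemma blk0 k (v : 'rV[R]_(\sum_(i < k) 2)) : (forall i, blk v i = (0, 0)) -> v = 0.
Proof.
move=> h; rewrite -(vec_blk v) /vec; under eq_mxrow do rewrite h.
rewrite -(mxrow0 (q_ := fun _ : 'I_k => 2%N)); apply: eq_mxrow => i.
by apply/rowP => l; rewrite !mxE; case: ifP.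
Qed.

Lemma cmul_eq_self (z a : cC) : cnorm (cadd a (-1, 0)) != 0 -> cmul z a = z -> z = (0, 0).
Proof.
move=> ha e; apply: cnorm_eq0.
have : cnorm (cmul z (cadd a (-1, 0))) = 0.
  rewrite (_ : cmul _ _ = (0, 0)) /cnorm /=; first by ring.
  by move: e; case: z a {ha} => [x y] [u w] [] e1 e2; rewrite /cmul /=; congr (_,_); lra.
by rewrite cnorm_mul => /eqP; rewrite mulf_eq0 (negbTE ha) orbF => /eqP.
Qed.
End Gen.


Section Main.
Variables (R : realType) (p : nat).
Local Notation cC := (cC R).
Definition NN := (Zp_trunc p).+2.
Arguments NN : simpl never.
Definition th : R := pi / NN%:R.
Definition xi : cC := (cos (th *+ 2), sin (th *+ 2)).

Lemma NN_gt1 : (1 < NN)%N. Proof. by []. Qed.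
Lemma NN_neq0 : NN%:R != 0 :> R. Proof. by rewrite pnatr_eq0. Qed.

Lemma thN : th *+ NN = pi.
Proof. by rewrite /th -[(pi / _) *+ _]mulr_natr divfK // NN_neq0. Qed.

Lemma xiN : cpow xi NN = cone R.
Proof. by rewrite /xi cpow_angle mulrnAC thN cos2pi sin2pi. Qed.

Lemma xi_norm : cnorm xi = 1. Proof. exact: cnorm_angle. Qed.

Lemma Zp_val_add (j k : 'Z_p) : nat_of_ord (j + k) = ((j + k) %% NN)%N.
Proof. by []. Qed.
Lemma Zp_val0 : nat_of_ord (0 : 'Z_p) = 0%N. Proof. by []. Qed.
Lemma Zp_val1 : nat_of_ord (1 : 'Z_p) = 1%N.
Proof. by rewrite /= modn_small. Qed.

Lemma cpow_xi_mod n : cpow xi (n %% NN) = cpow xi n.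
Proof.
by rewrite {2}(divn_eq n NN) cpowD mulnC cpowM xiN cpow_one cmulC cmul1.
Qed.

Lemma cpow_xi_N n : cpow (cpow xi n) NN = cone R.
Proof. by rewrite -cpowM mulnC cpowM xiN cpow_one. Qed.

Lemma th_pos : 0 < th.
Proof. by rewrite /th divr_gt0 // ?pi_gt0 // ltr0n. Qed.
Lemma th_lt : th < pi.
Proof.
rewrite /th ltr_pdivrMr ?ltr0n // -{1}(mulr1 pi) ltr_pM2l ?pi_gt0 //.
by rewrite (ltr_nat R 1 NN).
Qed.

Lemma xi_ne1 : cnorm (cadd xi (-1, 0)) != 0.
Proof.
have E : cnorm (cadd xi (-1, 0)) = 4 * sin th ^+ 2.
  rewrite /cnorm /xi /= cos_mulr2n sin_mulr2n.
  have := cos2Dsin2 th; rewrite !mulr2n => h.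
  rewrite (_ : 4 = 2 * 2) //; last by rewrite -natrM.
  apply/eqP; rewrite -subr_eq0; apply/eqP.
  transitivity (- (2 * 2) * (1 - cos th ^+ 2) * (cos th ^+ 2 + sin th ^+ 2 - 1)); last by rewrite h subrr mulr0.
  ring.
rewrite E mulf_neq0 // ?pnatr_eq0 // sqrf_eq0 gt_eqF //.
by apply: sin_gt0_pi; rewrite th_pos th_lt.
Qed.

Definition sgn : R := (-1) ^+ NN.+1.
Definition aV (t : 'M[R]_2) (j : 'Z_p) (i : 'I_4) : cC :=
  if (i < 2)%N then ct t else cmul (ct t) (cpow xi j).
Definition aW (t : 'M[R]_2) (j : 'Z_p) (i : 'I_3) : cC :=
  if (i < 2)%N then cpow (ct t) NN else cpow xi j.
Definition rhoV (t : 'M[R]_2) (j : 'Z_p) := bd (fun i => cmx (aV t j i)).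
Definition rhoW (t : 'M[R]_2) (j : 'Z_p) := bd (fun i => cmx (aW t j i)).

Lemma aV_norm t j i : SO2 t -> cnorm (aV t j i) = 1.
Proof.
move=> /SO2_ct [_ h]; rewrite /aV; case: ifP => _ //.
by rewrite cnorm_mul cnorm_pow xi_norm h expr1n mulr1.
Qed.
Lemma aW_norm t j i : SO2 t -> cnorm (aW t j i) = 1.
Proof.
move=> /SO2_ct [_ h]; rewrite /aW; case: ifP => _; rewrite cnorm_pow ?h ?xi_norm expr1n //.
Qed.

Lemma ct_mul (t s : 'M[R]_2) : SO2 t -> ct (t *m s) = cmul (ct t) (ct s).
Proof.
move=> /SO2_ct [Et _]; rewrite [in t *m s]Et /ct /cmul !mxE !sum2 !mxE /=.
by congr (_,_); ring.
Qed.

Lemma ct_one : ct (1%:M : 'M[R]_2) = cone R.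
Proof. by rewrite /ct !mxE. Qed.

Lemma ccont_ct : ccont (fun t : 'M[R]_2 => ct t).
Proof. by split; apply: coord_continuous. Qed.

Lemma ccont_if (T : topologicalType) (b : bool) (F G : T -> cC) :
  ccont F -> ccont G -> ccont (fun x => if b then F x else G x).
Proof. by case: b. Qed.

Lemma orth_rhoV : orth_rep rhoV.
Proof.
split.
- by move=> t j ht; apply: bd_cmx_orth => i; apply: aV_norm.
- rewrite /rhoV -(bd_scalar 4 1) -cmx_one; congr bd; apply: funext => i; congr cmx.
  by rewrite /aV ct_cmx Zp_val0 /=; case: ifP => _ //; rewrite cmul1.
- move=> t s j k ht hs; rewrite /rhoV bd_cmx_mul; congr bd; apply: funext => i; congr cmx.
  rewrite /aV Zp_val_add cpow_xi_mod cpowD ct_mul //; case: ifP => _ //.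
  move: (ct t) (ct s) (cpow xi j) (cpow xi k) => a b c d.
  by rewrite !cmulA; congr cmul; rewrite -!cmulA; congr cmul; apply: cmulC.
- move=> j; apply: continuous_subspaceT; apply: bd_cont => i a b.
  apply: ccont_cmx; apply: ccont_if; first exact: ccont_ct.
  by apply: ccont_mul; [exact: ccont_ct|exact: ccont_cst].
Qed.

Lemma orth_rhoW : orth_rep rhoW.
Proof.
split.
- by move=> t j ht; apply: bd_cmx_orth => i; apply: aW_norm.
- rewrite /rhoW -(bd_scalar 3 1) -cmx_one; congr bd; apply: funext => i; congr cmx.
  by rewrite /aW ct_cmx Zp_val0 cpow_one; case: ifP.
- move=> t s j k ht hs; rewrite /rhoW bd_cmx_mul; congr bd; apply: funext => i; congr cmx.
  by rewrite /aW Zp_val_add cpow_xi_mod cpowD ct_mul // cpow_mul; case: ifP.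
- move=> j; apply: continuous_subspaceT; apply: bd_cont => i a b.
  apply: ccont_cmx; apply: ccont_if; last exact: ccont_cst.
  by apply: ccont_pow; exact: ccont_ct.
Qed.

Lemma cnorm_m2 : cnorm (cadd (-1, 0) (-1, 0) : cC) != 0.
Proof.
apply/negP => /eqP H; have H4 : (4 : R) = 0 by rewrite -H /cnorm /=; ring.
lra.
Qed.

Lemma fpf_V : fixed_point_free rhoV.
Proof.
move=> v h; apply: blk0 => i.
have hs : SO2 (cmx ((-1, 0) : cC)) by apply: SO2_cmx; rewrite /cnorm /=; ring.
have := fpf_blk (h _ 0 hs) i.
rewrite /aV ct_cmx Zp_val0 /=.
have -> : (if (i < 2)%N then ((-1, 0) : cC) else cmul (-1, 0) (cone R)) = (-1, 0).
  by case: ifP => _ //; rewrite cmul1.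
by apply: cmul_eq_self; apply: cnorm_m2.
Qed.

Lemma fpf_W : fixed_point_free rhoW.
Proof.
move=> v h; apply: blk0 => i.
case: (boolP (i < 2)%N) => hi.
  have hs : SO2 (cmx ((cos th, sin th) : cC)) by apply: SO2_cmx; apply: cnorm_angle.
  have := fpf_blk (h _ 0 hs) i.
  rewrite /aW ct_cmx hi cpow_angle thN cospi sinpi.
  by apply: cmul_eq_self; apply: cnorm_m2.
have hs : SO2 (cmx (cone R)) by apply: SO2_cmx; rewrite /cnorm /=; ring.
have := fpf_blk (h _ 1 hs) i.
rewrite /aW (negbTE hi) Zp_val1 cpowS /= cmul1.
by apply: cmul_eq_self; apply: xi_ne1.
Qed.

Definition gC (z : 'I_4 -> cC) (i : 'I_3) : cC :=
  if (i : nat) == 0%N then cadd (cpow (z (inord 0)) NN) (cpow (z (inord 2)) NN)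
  else if (i : nat) == 1%N then cadd (cpow (z (inord 1)) NN) (cscale sgn (cpow (z (inord 3)) NN))
  else cadd (cmul (cconj (z (inord 0))) (z (inord 2))) (cmul (cconj (z (inord 1))) (z (inord 3))).

Definition g (v : 'rV[R]_(\sum_(i < 4) 2)) : 'rV[R]_(\sum_(i < 3) 2) := vec (gC (blk v)).

Lemma sum3 (F : 'I_3 -> R) : \sum_(i < 3) F i = F (inord 0) + F (inord 1) + F (inord 2).
Proof.
rewrite !big_ord_recr big_ord0 /= add0r.
by congr (F _ + F _ + F _); apply/val_inj; rewrite /= inordK.
Qed.
Lemma sum4 (F : 'I_4 -> R) :
  \sum_(i < 4) F i = F (inord 0) + F (inord 1) + F (inord 2) + F (inord 3).
Proof.
rewrite !big_ord_recr big_ord0 /= add0r.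
by congr (F _ + F _ + F _ + F _); apply/val_inj; rewrite /= inordK.
Qed.

Lemma Sv_ge0 n (v : 'rV[R]_n) : 0 <= Sv v.
Proof. by apply: sumr_ge0 => l _; apply: sqr_ge0. Qed.

Lemma g_eq0 v : Sv (g v) = 0 -> v = 0.
Proof.
rewrite Sv_blk => H.
have H0 : forall i, cnorm (blk (g v) i) = 0.
  move=> i; apply: (psumr_eq0P (P := predT)) H _ _ => // l _; exact: cnorm_ge0.
have G : forall k : nat, (k < 3)%N -> gC (blk v) (inord k) = (0, 0).
  by move=> k hk; apply: cnorm_eq0; rewrite -(blk_vec (gC (blk v))) H0.
have e1 := G 0%N isT; have e2 := G 1%N isT; have e3 := G 2%N isT.
rewrite /gC !inordK // /= in e1 e2 e3.
have [z1 z2 z3 z4] := key (ltnW NN_gt1) e1 e2 e3.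
apply: blk0 => i; rewrite -(inord_val i).
by case: i => [[|[|[|[|m]]]] hi] //=.
Qed.

Lemma ccont_blk k (i : 'I_k) : ccont (fun v : 'rV[R]_(\sum_(i < k) 2) => blk v i).
Proof. by split; apply: submxrow_cont. Qed.

Lemma ccont_gC i : ccont (fun v : 'rV[R]_(\sum_(i < 4) 2) => gC (blk v) i).
Proof.
rewrite /gC; apply: ccont_if; last apply: ccont_if.
- by apply: ccont_add; apply: ccont_pow; apply: ccont_blk.
- by apply: ccont_add; [|apply: ccont_scale]; apply: ccont_pow; apply: ccont_blk.
- by apply: ccont_add; apply: ccont_mul; try apply: ccont_conj; apply: ccont_blk.
Qed.

Lemma ofC_cont (T : topologicalType) (F : T -> cC) b : ccont F -> continuous (fun x => ofC (F x) ord0 b).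
Proof.
move=> [F1 F2]; case: (I2 b) => ->; under eq_fun do rewrite mxE /=; by [].
Qed.

Lemma g_cont : continuous g.
Proof.
rewrite /g /vec; apply: mxrow_cont => i b; apply: ofC_cont; exact: ccont_gC.
Qed.

Arguments cpow : simpl never.
Lemma gC_equiv t j (z : 'I_4 -> cC) i : SO2 t ->
  gC (fun i => cmul (z i) (aV t j i)) i = cmul (gC z i) (aW t j i).
Proof.
move=> /SO2_ct [_ hu].
have hw := cpow_xi_N j.
rewrite -(inord_val i); case: i => [[|[|[|m]]] hi] //;
  rewrite /gC /aV /aW !inordK //=; move: (ct t) hu (cpow xi j) hw => u hu w hw.
  rewrite !cpow_mul hw.
  move: (cpow (z (inord 0)) NN) (cpow (z (inord 2)) NN) (cpow u NN) => [a b] [c d] [e f].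
  by rewrite /cadd /cmul /cone /=; congr (_,_); ring.
- rewrite !cpow_mul hw.
  move: (cpow (z (inord 1)) NN) (cpow (z (inord 3)) NN) (cpow u NN) => [a b] [c d] [e f].
  by rewrite /cadd /cmul /cscale /cone /=; congr (_,_); ring.
- have E : forall a b, cmul (cconj (cmul a u)) (cmul b (cmul u w)) =
      cmul (cmul (cconj a) b) (cmul (cmul (cconj u) u) w).
    move=> [a1 a2] [b1 b2]; move: u w {hu hw} => [u1 u2] [w1 w2].
    by rewrite /cconj /cmul /=; congr (_,_); ring.
  rewrite !E cmul_conj hu; clear hw E.
  move: (cmul (cconj (z (inord 0))) (z (inord 2))) (cmul (cconj (z (inord 1))) (z (inord 3))) w
    => [a b] [c d] [e f].
  by rewrite /cadd /cmul /=; congr (_,_); ring.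
Qed.

Lemma cont_comp (A B C : topologicalType) (f : A -> B) (h : B -> C) :
  continuous f -> continuous h -> continuous (fun x => h (f x)).
Proof. by move=> hf hh x; apply: (continuous_comp (hf x) (hh (f x))). Qed.

Lemma cont_sum (T : topologicalType) n (F : 'I_n -> T -> R) :
  (forall i, continuous (F i)) -> continuous (fun x => \sum_(i < n) F i x).
Proof.
elim: n F => [|n IH] F h.
  by under eq_fun do rewrite big_ord0; exact: contC.
under eq_fun do rewrite big_ord_recr.
by apply: contD; [apply: (IH (fun i => F (widen_ord (leqnSn n) i))) => i|]; apply: h.
Qed.

Lemma contX2 (T : topologicalType) (f : T -> R) : continuous f -> continuous (fun x => f x ^+ 2).
Proof.
move=> hf; have E : (fun x => f x ^+ 2) = (fun x => f x * f x) by apply: funext => x; rewrite expr2.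
by rewrite E; apply: contM.
Qed.

Lemma cont_entry_scale (T : topologicalType) m n (s : T -> R) (G : T -> 'M[R]_(m, n)) a b :
  continuous s -> continuous G -> continuous (fun x => (s x *: G x) a b).
Proof.
move=> hs hG; have E : (fun x => (s x *: G x) a b) = (fun x => s x * G x a b).
  by apply: funext => x; rewrite mxE.
rewrite E; apply: contM => //.
exact: (@cont_comp _ _ _ G (fun M : 'M[R]_(m, n) => M a b) hG (@coord_continuous _ _ _ a b)).
Qed.

Lemma contVinv (T : topologicalType) (s : T -> R) :
  (forall x, s x != 0) -> continuous s -> continuous (fun x => (s x)^-1).
Proof. by move=> h hs x; exact: (cvgV (h x) (hs x)). Qed.

Lemma Sv_cont n : continuous (fun v : 'rV[R]_n => Sv v).
Proof.
rewrite /Sv; apply: cont_sum => l; under eq_fun do rewrite expr2.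
by apply: contM; apply: coord_continuous.
Qed.

Definition Dd (v : 'rV[R]_(\sum_(i < 4) 2)) := Sv (g v) + (1 - Sv v) ^+ 2.
Definition ff (v : 'rV[R]_(\sum_(i < 4) 2)) := (Num.sqrt (Dd v))^-1 *: g v.

Lemma Sv0 n : Sv (0 : 'rV[R]_n) = 0.
Proof. by rewrite /Sv big1 // => l _; rewrite mxE expr0n. Qed.

Lemma Dd_gt0 v : 0 < Dd v.
Proof.
rewrite /Dd; have [H|H] := eqVneq (Sv (g v)) 0.
  by rewrite H (g_eq0 H) Sv0 subr0 expr1n add0r.
apply: ltr_wpDr; first exact: sqr_ge0.
by rewrite lt_def H Sv_ge0.
Qed.

Lemma ff_sphere v : Sv v = 1 -> Sv (ff v) = 1.
Proof.
move=> h; rewrite /ff Sv_scale exprVn sqr_sqrtr ?ltW ?Dd_gt0 //.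
have -> : Dd v = Sv (g v) by rewrite /Dd h subrr expr0n addr0.
apply: mulVf; apply/eqP => H; move: (g_eq0 H) => v0.
by move: h; rewrite v0 Sv0 => /eqP; rewrite eq_sym oner_eq0.
Qed.

Lemma Dd_cont : continuous Dd.
Proof.
rewrite /Dd; apply: contD; first exact: (cont_comp g_cont (@Sv_cont _)).
by apply: contX2; apply: contB; [apply: contC|apply: Sv_cont].
Qed.

Lemma ff_cont : continuous ff.
Proof.
apply: mx_cont => a b.
apply: (@cont_entry_scale _ _ _ (fun v => (Num.sqrt (Dd v))^-1) g); last exact: g_cont.
apply: contVinv.
  by move=> x; rewrite gt_eqF // sqrtr_gt0 Dd_gt0.
exact: (@cont_comp _ _ _ Dd (@Num.sqrt R) Dd_cont (@sqrt_continuous R)).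
Qed.

Lemma act_V t j v : act rhoV t j v = vec (fun i => cmul (blk v i) (aV t j i)).
Proof. exact: act_bd. Qed.
Lemma act_W t j w : act rhoW t j w = vec (fun i => cmul (blk w i) (aW t j i)).
Proof. exact: act_bd. Qed.

Lemma blk_vecF k (F : 'I_k -> cC) : blk (vec F) = F.
Proof. by apply: funext => i; apply: blk_vec. Qed.

Lemma g_act t j v : SO2 t -> g (act rhoV t j v) = act rhoW t j (g v).
Proof.
move=> ht; rewrite act_V act_W /g !blk_vecF; congr vec; apply: funext => i.
exact: gC_equiv.
Qed.

Lemma Sv_actV t j v : SO2 t -> Sv (act rhoV t j v) = Sv v.
Proof.
move=> ht; rewrite act_V !Sv_blk blk_vecF; apply: eq_bigr => i _.
by rewrite cnorm_mul aV_norm // mulr1.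
Qed.
Lemma Sv_actW t j w : SO2 t -> Sv (act rhoW t j w) = Sv w.
Proof.
move=> ht; rewrite act_W !Sv_blk blk_vecF; apply: eq_bigr => i _.
by rewrite cnorm_mul aW_norm // mulr1.
Qed.

Lemma ff_Gmap : Gmap rhoV rhoW ff.
Proof.
split.
- exact: ff_sphere.
- exact: continuous_subspaceT ff_cont.
- move=> t j v ht _.
  rewrite /ff /Dd g_act // Sv_actW // Sv_actV //.
  by rewrite /act scalemxAl.
Qed.
End Main.

Theorem proposition4p5 (R : realType) (p : nat) (hp : prime p) :
  exists (n m : nat) (rhoV : 'M[R]_2 -> 'Z_p -> 'M[R]_n)
         (rhoW : 'M[R]_2 -> 'Z_p -> 'M[R]_m) (f : 'rV[R]_n -> 'rV[R]_m),
    [/\ orth_rep rhoV /\ orth_rep rhoW,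
        fixed_point_free rhoV /\ fixed_point_free rhoW,
        (m < n)%N & Gmap rhoV rhoW f].
Proof.
exists (\sum_(i < 4) 2)%N, (\sum_(i < 3) 2)%N, (@rhoV R p), (@rhoW R p), (@ff R p).
split.
- by split; [apply: orth_rhoV|apply: orth_rhoW].
- by split; [apply: fpf_V|apply: fpf_W].
- by rewrite !big_const_ord.
- exact: ff_Gmap.
Qed.
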